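(* Let $G$ be a bipartite graph with at most one isolated vertex and no connected component consisting of a single edge, and let $s=s(G)$ be its irregularity strength. Then $G$ contains a spanning subgraph $H$ with $m(H)\le 2s-1$. If moreover $G$ is regular, then $G$ contains a spanning subgraph $H$ with $m(H)\le 2s-3$.
   Context: All graphs are finite and simple. For a graph $G$ and integer $k\ge0$, $m(G,k)$ is the number of vertices of degree exactly $k$ in $G$ and $m(G)=\max_k m(G,k)$. For a graph $G=(V,E)$ with at most one isolated vertex and no isolated edges (components isomorphic to $K_2$), the irregularity strength $s(G)$ is the smallest positive integer $s$ such that there is a function $w:E\to\{1,2,\dots,s\}$ for which the sums $\sum_{e\ni v}w(e)$, $v\in V$, are pairwise distinct. *)

(* Defs.v *)
(* A simple graph on a finite vertex type T is a symmetric,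
   irreflexive relation e : rel T. *)
From mathcomp Require Import all_boot.
Set Implicit Arguments. Unset Strict Implicit. Unset Printing Implicit Defensive.

Section Graphs.
Variable T : finType.

Definition simple_graph (e : rel T) : Prop := irreflexive e /\ symmetric e.

Definition deg (e : rel T) (v : T) : nat := #|[set u | e v u]|.

(* m(G,k) and m(G) = max_k m(G,k); degrees are at most #|T| *)
Definition mk (e : rel T) (k : nat) : nat := #|[set v | deg e v == k]|.
Definition mG (e : rel T) : nat := \max_(k < #|T|.+1) mk e k.

Definition bipartite (e : rel T) : Prop :=
  exists A : {set T}, forall u v, e u v -> (u \in A) != (v \in A).

Definition regular (e : rel T) : Prop := exists d, forall v, deg e v = d.

Definition at_most_one_isolated (e : rel T) : Prop :=
  forall u v, deg e u = 0 -> deg e v = 0 -> u = v.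

(* no component isomorphic to K2: no edge uv with both endpoints of degree 1 *)
Definition no_isolated_edge (e : rel T) : Prop :=
  forall u v, e u v -> ~ (deg e u = 1 /\ deg e v = 1).

Definition spanning_subgraph (e h : rel T) : Prop :=
  symmetric h /\ forall u v, h u v -> e u v.

(* edge weighting w (given on ordered pairs, required symmetric on edges)
   with values in {1..s}; weighted degree = sum of weights of incident edges *)
Definition wdeg (e : rel T) (w : T -> T -> nat) (v : T) : nat :=
  \sum_(u | e v u) w v u.

Definition irregular_weighting (e : rel T) (s : nat) (w : T -> T -> nat) : Prop :=
  (forall u v, e u v -> w u v = w v u /\ 1 <= w u v <= s) /\
  injective (wdeg e w).

Definition irregularity_strength (e : rel T) (s : nat) : Prop :=
  0 < s /\ (exists w, irregular_weighting e s w) /\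
  forall s', 0 < s' -> (exists w, irregular_weighting e s' w) -> s <= s'.

End Graphs.

(* Main.v *)
Require Import Defs.
From mathcomp Require Import all_boot all_order all_algebra zify ring.
Import GRing.Theory Num.Theory Order.TTheory.
Set Implicit Arguments. Unset Strict Implicit. Unset Printing Implicit Defensive.

Section Round.
Local Notation "n %:Z" := (Posz n).
Variable T : finType.
Variable e : rel T.
Variable A : {set T}.
Variable s : nat.
Variable c : T -> T -> nat.
Hypothesis e_irr : irreflexive e.
Hypothesis e_sym : symmetric e.
Hypothesis bip : forall u v, e u v -> (u \in A) != (v \in A).
Hypothesis c_sym : forall u v, e u v -> c u v = c v u.
Hypothesis c_le : forall u v, e u v -> c u v <= s.
Hypothesis s_gt0 : 0 < s.

Definition good (R : rel T) := symmetric R /\ forall u v, R u v -> e u v.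
Definition arc (R : rel T) : rel T :=
  fun u v => e u v && (if u \in A then ~~ R u v else R u v).
Definition flip (x y : T) (R : rel T) : rel T :=
  fun u v => R u v (+) ((u == x) && (v == y) || (u == y) && (v == x)).
Fixpoint tog (R : rel T) (x : T) (p : seq T) : rel T :=
  match p with [::] => R | y :: q => flip x y (tog R y q) end.

Definition sg (u : T) : int := if u \in A then 1%R else (-1)%R.

Lemma deg_ext (R1 R2 : rel T) v : R1 v =1 R2 v -> deg R1 v = deg R2 v.
Proof. by move=> H; apply: eq_card => u; rewrite !inE H. Qed.

Lemma tog_good R x p : good R -> path (arc R) x p -> good (tog R x p).
Proof.
elim: p x => [|y q IH] x //= gR /andP[axy pq].
have [sy sub] := IH y gR pq.
split.
  move=> u v; rewrite /flip sy; congr addb.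
  by case: (u == x); case: (v == y); case: (u == y); case: (v == x).
move=> u v; rewrite /flip.
case: (boolP (tog R y q u v)) => [/sub -> //|_] /=.
move: axy => /andP[exy _].
by case/orP=> /andP[/eqP -> /eqP ->] //; rewrite e_sym.
Qed.

Lemma tog_out R x p u v : u \notin x :: p -> tog R x p u v = R u v.
Proof.
elim: p x => [|y q IH] x //= Hu.
rewrite /flip IH; last by move: Hu; rewrite !inE negb_or => /andP[].
move: Hu; rewrite !inE negb_or => /andP[/negPf -> /norP[/negPf -> _]].
by rewrite /= addbF.
Qed.

Lemma deg_flip R x y v : x != y -> symmetric R ->
  ((deg (flip x y R) v)%:Z = (deg R v)%:Z +
     (((v == x) : nat)%:Z + ((v == y) : nat)%:Z) * (if R x y then -1 else 1))%R.
Proof.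
move=> nxy sR.
have [->|nvx] := eqVneq v x.
  rewrite ?eqxx ?(negPf nxy) /deg.
  have -> : [set u | flip x y R x u] = if R x y then [set u | R x u] :\ y
                                     else y |: [set u | R x u].
    apply/setP=> u; rewrite /flip eqxx (negPf nxy) /=.
    case Rxy: (R x y); rewrite !inE;
      have [->|nuy] := eqVneq u y; rewrite ?Rxy ?andbF ?orbF ?orbT ?addbF ?addbT //=.
  case: (boolP (R x y)) => Rxy.
    rewrite (cardsD1 y [set u | R x u]) inE Rxy /=. lia.
  rewrite cardsU1 inE (negPf Rxy) /=. lia.
have [->|nvy] := eqVneq v y.
  rewrite /deg.
  have -> : [set u | flip x y R y u] = if R x y then [set u | R y u] :\ x
                                     else x |: [set u | R y u].
    apply/setP=> u; rewrite /flip eqxx [y == x]eq_sym (negPf nxy) /=.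
    case Rxy: (R x y); rewrite !inE;
      have [->|nux] := eqVneq u x; rewrite ?(sR y x) ?Rxy ?andbF ?orbF ?orbT ?addbF ?addbT //=.
  case: (boolP (R x y)) => Rxy.
    rewrite (cardsD1 x [set u | R y u]) inE (sR y x) Rxy /=. lia.
  rewrite cardsU1 inE (sR y x) (negPf Rxy) /=. lia.
rewrite /= mul0r addr0; congr Posz.
apply: deg_ext => u; by rewrite /flip (negPf nvx) (negPf nvy) /= addbF.
Qed.

Lemma deg_tog R x p v : good R -> path (arc R) x p -> uniq (x :: p) ->
  ((deg (tog R x p) v)%:Z = (deg R v)%:Z + ((v == x) : nat)%:Z * sg x
     - ((v == last x p) : nat)%:Z * sg (last x p))%R.
Proof.
elim: p x => [|y q IH] x gR /=.
  by move=> _ _; rewrite addrK.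
move=> /andP[axy pq] /andP[xnin uq].
have [sT _] := tog_good gR pq.
have nxy : x != y.
  by apply/eqP=> exy; move: axy; rewrite exy /arc e_irr.
rewrite deg_flip // IH //.
have -> : tog R y q x y = R x y by rewrite tog_out.
move: axy; rewrite /arc /sg => /andP[exy].
have := bip exy.
case: (x \in A); case: (y \in A) => //= _.
  move=> /negPf ->; lia.
move=> ->; lia.
Qed.


Definition D (v : T) : nat := \sum_(u | e v u) c v u.
Definition xv (R : rel T) (v : T) : int := ((s * deg R v)%:Z - (D v)%:Z)%R.
Definition Phi (R : rel T) : int := (\sum_v (xv R v) ^+ 2)%R.

Lemma split2 (f : T -> int) x z : x != z ->
  (\sum_v f v = f x + f z + \sum_(v | (v != x) && (v != z)) f v)%R.
Proof.
move=> nxz; rewrite (bigD1 x) //= (bigD1 z) /=; last by rewrite eq_sym.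
by rewrite addrA.
Qed.

Lemma xv_tog R x p v : good R -> path (arc R) x p -> uniq (x :: p) ->
  xv (tog R x p) v = (xv R v + s%:Z * (((v == x) : nat)%:Z * sg x
     - ((v == last x p) : nat)%:Z * sg (last x p)))%R.
Proof.
move=> gR pth uq; rewrite /xv !PoszM deg_tog //. ring.
Qed.

Lemma Phi_tog R x p : good R -> path (arc R) x p -> uniq (x :: p) ->
  x != last x p ->
  Phi (tog R x p) = (Phi R + ((xv R x + s%:Z * sg x) ^+ 2 - xv R x ^+ 2)
     + ((xv R (last x p) - s%:Z * sg (last x p)) ^+ 2
        - xv R (last x p) ^+ 2))%R.
Proof.
move=> gR pth uq nxz; rewrite /Phi !(split2 _ nxz).
rewrite !xv_tog // eqxx (negPf nxz) eq_sym (negPf nxz) eqxx /=.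
have -> : (\sum_(v | (v != x) && (v != last x p)) xv (tog R x p) v ^+ 2 =
          \sum_(v | (v != x) && (v != last x p)) xv R v ^+ 2)%R.
  apply: eq_bigr => v /andP[/negPf h1 /negPf h2].
  by rewrite xv_tog // h1 h2 /= !mul0r subrr mulr0 addr0.
ring.
Qed.

Definition relS (S : {set T * T}) : rel T :=
  fun u v => e u v && (if u \in A then (u, v) \in S else (v, u) \in S).

Lemma relS_good S : good (relS S).
Proof.
split; last by move=> u v /andP[].
move=> u v; rewrite /relS e_sym.
case: (boolP (e v u)) => //= evu.
have := bip evu; case: (v \in A); case: (u \in A) => //.
Qed.

Lemma Phi_ge0 R : (0 <= Phi R)%R.
Proof. by apply: sumr_ge0 => v _; apply: sqr_ge0. Qed.

Lemma Phi_ext R1 R2 : R1 =2 R2 -> Phi R1 = Phi R2.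
Proof.
move=> H; apply: eq_bigr => v _; by rewrite /xv (deg_ext (H v)).
Qed.

Lemma exists_min : exists R, good R /\ forall R', good R' -> (Phi R <= Phi R')%R.
Proof.
case: (@arg_minnP _ set0 xpredT (fun S => `|Phi (relS S)|%N) erefl) => S _ HS.
exists (relS S); split; first exact: relS_good.
move=> R' [sR' subR'].
have eqR : relS [set p | R' p.1 p.2] =2 R'.
  move=> u v; rewrite /relS !inE /=.
  case: (boolP (R' u v)) => Ruv.
    by rewrite (subR' _ _ Ruv); case: (u \in A) => //=; rewrite sR' Ruv.
  by case: (e u v) => //; case: (u \in A) => //=; rewrite sR' (negPf Ruv).
have := HS [set p | R' p.1 p.2] erefl.
rewrite (Phi_ext eqR).
have h1 := Phi_ge0 (relS S); have h2 := Phi_ge0 R'.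
lia.
Qed.

Lemma deg_sum (R : rel T) u : (forall u v, R u v -> e u v) ->
  deg R u = \sum_(v | e u v) (R u v : nat).
Proof.
move=> subR; rewrite /deg -sum1_card big_mkcond [RHS]big_mkcond /=.
apply: eq_bigr => v _; rewrite inE.
case: (boolP (R u v)) => [/subR -> //|_]; by case: (e u v).
Qed.

Lemma Posz_sum (I : finType) (P : pred I) (F : I -> nat) :
  (\sum_(i | P i) F i)%:Z = (\sum_(i | P i) (F i)%:Z)%R.
Proof. by rewrite (big_morph Posz PoszD (erefl 0%:Z)). Qed.

Lemma xv_sum (R : rel T) u : (forall u v, R u v -> e u v) ->
  xv R u = (\sum_(v | e u v) ((s * R u v)%:Z - (c u v)%:Z))%R.
Proof.
move=> subR; rewrite /xv deg_sum // /D sumrB PoszM !Posz_sum mulr_sumr.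
by congr (_ - _)%R; apply: eq_bigr => v _; rewrite PoszM.
Qed.

Lemma sg_opp u v : e u v -> sg v = (- sg u)%R.
Proof. move=> /bip; rewrite /sg; by case: (u \in A); case: (v \in A). Qed.

Lemma key (R : rel T) w : good R -> (forall R', good R' -> (Phi R <= Phi R')%R) ->
  w \in A -> (xv R w < s%:Z)%R.
Proof.
move=> [sR subR] minR wA.
have [//|Xge] := ltP (xv R w) s%:Z.
exfalso.
have sgw : sg w = 1%R by rewrite /sg wA.
pose S := [set u | connect (arc R) u w].
have Hpos : forall u, u \in S -> (0 <= sg u * xv R u)%R.
  move=> u; rewrite inE => /connectP [p pth lst].
  have [euw|nuw] := eqVneq u w.
    rewrite euw sgw mul1r; lia.
  move: lst; case: (shortenP pth) => p' pth' uq _ lst.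
  have := minR _ (tog_good (conj sR subR) pth').
  rewrite Phi_tog //; last by rewrite -lst.
  rewrite -lst sgw.
  rewrite /sg; case: (u \in A); nia.
pose g u v : int := (sg u * ((s * R u v)%:Z - (c u v)%:Z))%R.
have HL : (\sum_(u in S) sg u * xv R u = \sum_(u in S) \sum_(v | e u v) g u v)%R.
  by apply: eq_bigr => u _; rewrite xv_sum // mulr_sumr.
have Hge : (xv R w <= \sum_(u in S) sg u * xv R u)%R.
  rewrite (bigD1 w) /=; last by rewrite inE connect0.
  rewrite sgw mul1r lerDl; apply: sumr_ge0 => u /andP[uS _]; exact: Hpos.
have Hle : (\sum_(u in S) \sum_(v | e u v) g u v <= 0)%R.
  have -> : (\sum_(u in S) \sum_(v | e u v) g u v =
      \sum_(u in S) \sum_(v | e u v && (v \in S)) g u v +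
      \sum_(u in S) \sum_(v | e u v && ~~ (v \in S)) g u v)%R.
    by rewrite -big_split /=; apply: eq_bigr => u _; rewrite (bigID (fun v => v \in S)).
  have -> : (\sum_(u in S) \sum_(v | e u v && (v \in S)) g u v = 0)%R.
    pose h u v : int := if (u \in S) && (v \in S) && e u v then g u v else 0%R.
    have hQ : (\sum_(u in S) \sum_(v | e u v && (v \in S)) g u v =
               \sum_u \sum_v h u v)%R.
      rewrite big_mkcond /=; apply: eq_bigr => u _.
      case: (boolP (u \in S)) => uS /=.
        rewrite big_mkcond /=; apply: eq_bigr => v _; rewrite /h uS /=.
        by rewrite andbC.
      by rewrite big1 // => v _; rewrite /h (negPf uS).
    have hanti : forall u v, h u v = (- h v u)%R.
      move=> u v; rewrite /h.
      have -> : (v \in S) && (u \in S) && e v u = (u \in S) && (v \in S) && e u v.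
        by rewrite e_sym; case: (u \in S); case: (v \in S).
      case: ifP => [/andP[_ euv]|_]; last by rewrite oppr0.
      rewrite /g (sg_opp euv) (sR v u) (c_sym euv); ring.
    have : (\sum_u \sum_v h u v = - \sum_u \sum_v h u v)%R.
      rewrite [LHS]exchange_big /= -sumrN; apply: eq_bigr => v _.
      rewrite -sumrN; apply: eq_bigr => u _; exact: hanti.
    rewrite hQ; lia.
  rewrite add0r; apply: sumr_le0 => u uS; apply: sumr_le0 => v /andP[euv vS].
  have narc : ~~ arc R v u.
    apply/negP => avu; move: vS; rewrite inE => /negP; apply.
    by apply: connect_trans (connect1 avu) _; move: uS; rewrite inE.
  move: narc; rewrite /arc e_sym euv /= /g.
  have := bip euv; have := c_le euv; rewrite /sg (sR v u).
  case: (u \in A); case: (v \in A) => //= cle _.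
    move=> /negPf ->; lia.
  move=> /negbNE ->; lia.
lia.
Qed.

End Round.

Section Final.
Local Notation "n %:Z" := (Posz n).
Variable T : finType.

Definition compl (e Q : rel T) : rel T := fun u v => e u v && ~~ Q u v.

Lemma xv_compl (e : rel T) s c (Q : rel T) v :
  (forall u v, Q u v -> e u v) -> (forall u v, e u v -> c u v <= s) ->
  xv e s (fun u v => s - c u v) (compl e Q) v = (- xv e s c Q v)%R.
Proof.
move=> subQ cle.
rewrite (@xv_sum _ e s _ (compl e Q) v); last by move=> u w /andP[].
rewrite (xv_sum s c v subQ) -sumrN; apply: eq_bigr => u evu.
have := cle _ _ evu; rewrite /compl evu /=; case: (Q v u) => /=; lia.
Qed.

Lemma round (e : rel T) (A : {set T}) s c :
  irreflexive e -> symmetric e ->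
  (forall u v, e u v -> (u \in A) != (v \in A)) ->
  (forall u v, e u v -> c u v = c v u) ->
  (forall u v, e u v -> c u v <= s) -> 0 < s ->
  exists R, good e R /\ forall v, (- s%:Z < xv e s c R v)%R /\ (xv e s c R v < s%:Z)%R.
Proof.
move=> eirr esym bip csym cle s0.
have [R [gR minR]] := exists_min c esym bip s0.
have bip' : forall u v, e u v -> (u \in ~: A) != (v \in ~: A).
  by move=> u v /bip; rewrite !inE; case: (u \in A); case: (v \in A).
pose c' := fun u v => s - c u v.
have csym' : forall u v, e u v -> c' u v = c' v u by move=> u v euv; rewrite /c' csym.
have cle' : forall u v, e u v -> c' u v <= s by move=> u v _; rewrite /c' leq_subr.
have [sR subR] := gR.
have gR' : good e (compl e R).
  split; last by move=> u v /andP[].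
  by move=> u v; rewrite /compl esym sR.
have Phic : forall Q, good e Q -> Phi e s c' (compl e Q) = Phi e s c Q.
  move=> Q [_ subQ]; apply: eq_bigr => v _; rewrite xv_compl //; ring.
have minR' : forall R', good e R' -> (Phi e s c' (compl e R) <= Phi e s c' R')%R.
  move=> R' gR''; rewrite Phic //.
  have [sR'' subR''] := gR''.
  have -> : Phi e s c' R' = Phi e s c' (compl e (compl e R')).
    apply: Phi_ext => u v; rewrite /compl negb_and negbK.
    case: (boolP (R' u v)) => [/subR'' -> //|_]; by case: (e u v).
  have gc : good e (compl e R').
    split; last by move=> u v /andP[].
    by move=> u v; rewrite /compl esym sR''.
  rewrite (Phic _ gc). exact: (minR _ gc).
exists R; split => // v; split; last first.
  case: (boolP (v \in A)) => vA.
    exact: (key eirr esym bip csym cle s0 gR minR vA).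
  have vA' : v \in ~: A by rewrite inE.
  exact: (key eirr esym bip' csym cle s0 gR minR vA').
have : (xv e s c' (compl e R) v < s%:Z)%R.
  case: (boolP (v \in A)) => vA.
    exact: (key eirr esym bip csym' cle' s0 gR' minR' vA).
  have vA' : v \in ~: A by rewrite inE.
  exact: (key eirr esym bip' csym' cle' s0 gR' minR' vA').
rewrite /c' xv_compl //; lia.
Qed.

Lemma count_bound (R : rel T) s (Dv : T -> nat) : 0 < s -> injective Dv ->
  (forall v, s * deg R v < Dv v + s /\ Dv v < s * deg R v + s) ->
  mG R <= 2 * s - 1.
Proof.
move=> s0 inj H; rewrite /mG; apply/bigmax_leqP => k _.
rewrite /mk cardE.
have uq : uniq (map Dv (enum [set v | deg R v == k])).
  by rewrite (map_inj_uniq inj) enum_uniq.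
rewrite -(size_map Dv) -(size_iota (s * k + 1 - s) (2 * s - 1)).
apply: uniq_leq_size uq _ => y /mapP [v]; rewrite mem_enum inE => /eqP dk ->.
rewrite mem_iota; have := H v; rewrite dk; lia.
Qed.

Lemma round_nat (e : rel T) (A : {set T}) s c :
  irreflexive e -> symmetric e ->
  (forall u v, e u v -> (u \in A) != (v \in A)) ->
  (forall u v, e u v -> c u v = c v u) ->
  (forall u v, e u v -> c u v <= s) -> 0 < s ->
  injective (D e c) ->
  exists h : rel T, spanning_subgraph e h /\ mG h <= 2 * s - 1.
Proof.
move=> eirr esym bip csym cle s0 inj.
have [R [[sR subR] H]] := round eirr esym bip csym cle s0.
exists R; split; first by split.
apply: (count_bound s0 inj) => v; have := H v; rewrite /xv; lia.
Qed.

Lemma deg_e (e : rel T) v : deg e v = \sum_(u | e v u) 1.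
Proof. by rewrite sum1dep_card. Qed.

End Final.

Theorem theorem1p7 (T : finType) (e : rel T) (s : nat) :
  simple_graph e -> bipartite e ->
  at_most_one_isolated e -> no_isolated_edge e ->
  irregularity_strength e s ->
  (exists h : rel T, spanning_subgraph e h /\ mG h <= 2 * s - 1) /\
  (regular e -> (exists u v, e u v) ->
     exists h : rel T, spanning_subgraph e h /\ mG h <= 2 * s - 3).
Proof.
move=> [eirr esym] [A bip] _ _ [s0 [[w [wprop winj]] _]].
have wsym : forall u v, e u v -> w u v = w v u by move=> u v /wprop [].
have wle : forall u v, e u v -> w u v <= s by move=> u v /wprop [_ /andP[]].
have wge : forall u v, e u v -> 1 <= w u v by move=> u v /wprop [_ /andP[]].
split; first exact: (round_nat eirr esym bip wsym wle s0 winj).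
move=> [d hd] [u0 [v0 euv]].
pose c := fun u v => w u v - 1.
have Dc : forall v, D e c v = wdeg e w v - d.
  move=> v; rewrite /D /c sumnB; last by move=> u /wge.
  by rewrite -deg_e hd.
have wdge : forall v, d <= wdeg e w v.
  move=> v; rewrite -(hd v) deg_e; apply: leq_sum => u /wge //.
have s2 : 1 < s.
  case: (ltnP 1 s) => // sle1.
  have ws : forall v, wdeg e w v = d.
    move=> v; rewrite -(hd v) deg_e; apply: eq_bigr => u euv'.
    by apply/eqP; rewrite eqn_leq wge // andbT; apply: leq_trans (wle _ _ euv') sle1.
  have : u0 = v0 by apply: winj; rewrite !ws.
  by move=> eq; move: euv; rewrite eq eirr.
have inj : injective (D e c).
  move=> x y; rewrite !Dc => h; apply: winj.
  have := wdge x; have := wdge y; lia.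
have csym : forall u v, e u v -> c u v = c v u by move=> u v euv'; rewrite /c wsym.
have cle : forall u v, e u v -> c u v <= s - 1.
  by move=> u v euv'; rewrite /c; have := wle _ _ euv'; lia.
have [h [sh hb]] := round_nat eirr esym bip csym cle (ltac:(lia)) inj.
exists h; split => //; lia.
Qed.
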